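(* For integers $i\ge0$, $j\ge0$, $j_1\ge0$, $j_2\ge0$ and real $k_1,k_2,k$: (a) $b_{i,j_1+j_2,0}=\sum_{r=0}^{i}\binom{i}{r}b_{r,j_1,k}\,b_{i-r,j_2,-k}$; (b) $b_{i,j,0}=\sum_{r=0}^{i}\binom{i}{r}k^r\,b_{i-r,j,-k}$; (c) $b_{i,j,k}=\sum_{r=0}^{i}\binom{i}{r}k^{i-r}\,b_{r,j,0}$; (d) $b_{i,j,k_1+k_2}=\sum_{r=0}^{i}\binom{i}{r}k_1^{i-r}\,b_{r,j,k_2}$; (e) if $j\ge1$, then $j\cdot b_{i,j-1,k+1}=\sum_{r=0}^{i}\binom{i}{r}k^{i-r}\,b_{r+1,j,0}$.
   Context: For integers $i\ge0$, $j\ge0$ and real $k$, $b_{i,j,k}=\sum_{r=0}^{j}\binom{j}{r}(-1)^{j-r}(r+k)^i$, with the convention $0^0=1$ (also in the powers of $k$, $k_1$ appearing above). *)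

(* Defs.v *)
From mathcomp Require Import all_boot all_order all_algebra.
From mathcomp Require Export reals.
Set Implicit Arguments. Unset Strict Implicit. Unset Printing Implicit Defensive.
Import GRing.Theory Num.Theory.
Local Open Scope ring_scope.

(* b_{i,j,k} = sum_{r=0}^{j} C(j,r) (-1)^(j-r) (r+k)^i ; x ^+ 0 = 1 so 0^0 = 1. *)
Definition bcoef (R : ringType) (i j : nat) (k : R) : R :=
  \sum_(r < j.+1) ('C(j, r))%:R * (-1) ^+ (j - r) * (r%:R + k) ^+ i.

(* Main.v *)
Require Import Defs.
From mathcomp Require Import all_boot all_order all_algebra.
From mathcomp Require Import reals.
From mathcomp Require Import ring.
Import GRing.Theory Num.Theory.
Local Open Scope ring_scope.

Section Aux.
Variable R : realType.

Definition Ej (j : nat) (f : nat -> R) (n : nat) : R :=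
  \sum_(r < j.+1) ('C(j, r))%:R * (-1) ^+ (j - r) * f (n + r)%N.
Definition Dop (f : nat -> R) (n : nat) : R := f n.+1 - f n.

Lemma EjS j f n : Ej j.+1 f n = Ej j f n.+1 - Ej j f n.
Proof.
rewrite /Ej big_ord_recl /= bin0 subn0 mul1r.
under eq_bigr => r _ do rewrite /= binS subSS natrD !mulrDl.
rewrite big_split /=.
have -> : \sum_(r < j.+1) ('C(j, r))%:R * (-1) ^+ (j - r) * f (n + bump 0 r)%N
  = \sum_(r < j.+1) ('C(j, r))%:R * (-1) ^+ (j - r) * f (n.+1 + r)%N.
  by apply: eq_bigr => r _; rewrite /bump /= add1n addnS addSn.
rewrite [X in _ = _ - X]big_ord_recl /= bin0 subn0 mul1r addn0.
rewrite big_ord_recr /= bin_small // mul0r mul0r addr0.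
have -> : \sum_(i < j) ('C(j, (widen_ord (leqnSn j) i).+1))%:R *
      (-1) ^+ (j - widen_ord (leqnSn j) i) *
      f (n + bump 0 (widen_ord (leqnSn j) i))%N
  = - \sum_(i < j) ('C(j, bump 0 i))%:R * (-1) ^+ (j - bump 0 i) * f (n + bump 0 i)%N.
  rewrite -sumrN; apply: eq_bigr => r _ /=.
  rewrite /bump /= add1n -(subnSK (ltn_ord r)) exprS; ring.
rewrite exprS; ring.
Qed.

Lemma Ej_iter j f n : Ej j f n = iter j Dop f n.
Proof.
elim: j n => [|j IH] n.
  by rewrite /Ej big_ord_recl big_ord0 /= bin0 subnn expr0 addn0 addr0 !mul1r.
by rewrite EjS iterS /Dop !IH.
Qed.

Lemma bcoef_Ej i j (k : R) : bcoef i j k = Ej j (fun n => (n%:R + k) ^+ i) 0.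
Proof. by rewrite /bcoef /Ej; apply: eq_bigr => r _; rewrite add0n. Qed.

Lemma shiftD1 i j (a b : R) :
  bcoef i j (a + b) = \sum_(r < i.+1) ('C(i, r))%:R * a ^+ (i - r) * bcoef r j b.
Proof.
rewrite /bcoef.
have E (s : nat) : (s%:R + (a+b)) = a + (s%:R + b) by ring.
under eq_bigr => s _ do rewrite E exprDn mulr_sumr.
rewrite exchange_big /=; apply: eq_bigr => r _.
rewrite mulr_sumr; apply: eq_bigr => s _.
rewrite -mulr_natr; ring.
Qed.

Lemma shiftD2 i j (a b : R) :
  bcoef i j (a + b) = \sum_(r < i.+1) ('C(i, r))%:R * a ^+ r * bcoef (i - r) j b.
Proof.
rewrite /bcoef.
have E (s : nat) : (s%:R + (a+b)) = (s%:R + b) + a by ring.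
under eq_bigr => s _ do rewrite E exprDn mulr_sumr.
rewrite exchange_big /=; apply: eq_bigr => r _.
rewrite mulr_sumr; apply: eq_bigr => s _.
rewrite -mulr_natr; ring.
Qed.

End Aux.

Theorem mainTheorem9 (R : realType) (i j j1 j2 : nat) (k1 k2 k : R) :
  [/\ bcoef i (j1 + j2) 0 =
        \sum_(r < i.+1) ('C(i, r))%:R * bcoef r j1 k * bcoef (i - r) j2 (- k),
      bcoef i j 0 =
        \sum_(r < i.+1) ('C(i, r))%:R * k ^+ r * bcoef (i - r) j (- k),
      bcoef i j k =
        \sum_(r < i.+1) ('C(i, r))%:R * k ^+ (i - r) * bcoef r j 0,
      bcoef i j (k1 + k2) =
        \sum_(r < i.+1) ('C(i, r))%:R * k1 ^+ (i - r) * bcoef r j k2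
    & (1 <= j)%N ->
      j%:R * bcoef i j.-1 (k + 1) =
        \sum_(r < i.+1) ('C(i, r))%:R * k ^+ (i - r) * bcoef r.+1 j 0].
Proof.
split.
- rewrite bcoef_Ej Ej_iter iterD -Ej_iter /Ej.
  under eq_bigr => s _ do rewrite -Ej_iter /Ej.
  rewrite /bcoef.
  under [RHS]eq_bigr => r _ do rewrite -mulrA big_distrlr /= mulr_sumr.
  rewrite exchange_big /=; apply: eq_bigr => s _.
  under [RHS]eq_bigr => r _ do rewrite mulr_sumr.
  rewrite exchange_big mulr_sumr /=; apply: eq_bigr => t _.
  rewrite add0n natrD addr0 (_ : (s : nat)%:R + (t : nat)%:R = (t%:R - k) + (s%:R + k) :> R); last by ring.
  rewrite exprDn !mulr_sumr; apply: eq_bigr => r _.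
  rewrite -mulr_natr; ring.
- by rewrite -[0 in LHS](subrr k) shiftD2.
- by rewrite -[k in LHS]addr0 shiftD1.
- by rewrite shiftD1.
- case: j => [//|j] _ /=.
  rewrite /bcoef.
  under [RHS]eq_bigr => r _ do rewrite mulr_sumr.
  rewrite exchange_big /= [RHS]big_ord_recl /= [in RHS]big1; last first.
    by move=> r _; rewrite addr0 expr0n /= !mulr0.
  rewrite add0r mulr_sumr; apply: eq_bigr => s _.
  have H := mul_bin_diag j.+1 s; rewrite /= in H.
  have -> : (j.+1)%:R * (('C(j, s))%:R * (-1) ^+ (j - s) * (s%:R + (k + 1)) ^+ i)
    = ((j.+1 * 'C(j, s))%N)%:R * (-1) ^+ (j - s) * (s%:R + (k + 1)) ^+ i.
    by rewrite natrM; ring.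
  rewrite H natrM /bump /= add1n subSS addr0.
  have -> : (s%:R + (k + 1)) = k + (s.+1)%:R :> R by rewrite -natr1; ring.
  rewrite exprDn mulr_sumr; apply: eq_bigr => r _.
  rewrite -mulr_natr exprS; ring.
Qed.
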